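(* Let $L>0$, $V\in C^1([0,L];\mathbb{R})$ such that the only $x\in[0,L]$ with $V'(x)=0$ is $\mathbf{x}_0\in(0,L)$ and $V(\mathbf{x}_0)=\min_{[0,L]}V$. For $\varepsilon\in(0,1]$ let $q_\varepsilon\in C^1([0,L];\mathbb{R})$ with $q_\varepsilon\to0$ in $C^1([0,L])$, and $V_\varepsilon=V+q_\varepsilon$. Then for any family $(\lambda_\varepsilon)_{\varepsilon\in(0,1)}$ of real numbers with $\lambda_\varepsilon\to0$ as $\varepsilon\to0^+$ and any $\nu>0$, there are constants $C,\varepsilon_0>0$ such that for all $y\in[0,L]$, all $\varepsilon\in(0,\varepsilon_0]$, all $E\in\mathbb{R}$ and all $\psi$ satisfying $$-\varepsilon^2\psi''+V_\varepsilon\psi=E\psi,\qquad \psi\in H^2(0,L)\cap H^1_0(0,L),\qquad\|\psi\|_{L^2(0,L)}=1,$$ we have \begin{itemize} \item $\|\psi\|_{L^2(U)}\ge C$ with $U=(y-\nu,y+\nu)\cap[0,L]$, if $E\ge V(y)-\lambda_\varepsilon$; \item $\frac{\varepsilon}{\sqrt{|E|+1}}|\psi'(0)|\ge C$ if $E\ge V(0)+\nu$; \item $\frac{\varepsilon}{\sqrt{|E|+1}}|\psi'(L)|\ge C$ if $E\ge V(L)+\nu$. \end{itemize} *)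

(* Defs.v *)
From Stdlib Require Import Reals.
From Coquelicot Require Import Coquelicot.
Open Scope R_scope.

Definition cont_on_0L {V : UniformSpace} (L : R) (f : R -> V) : Prop :=
  forall x, 0 <= x <= L ->
    filterlim f (within (fun y => 0 <= y <= L) (locally x)) (locally (f x)).

(* f is C^1 on [0,L] with derivative df: f and df continuous on [0,L],
   f' = df on (0,L) (so df x at an endpoint is the one-sided derivative). *)
Definition C1_on (L : R) (f df : R -> R) : Prop :=
  cont_on_0L L f /\ cont_on_0L L df /\
  (forall x, 0 < x < L -> is_derive f x (df x)).

(* psi (complex valued) with psi' = dpsi is an H^2(0,L) \cap H^1_0(0,L) solution of
   -eps^2 psi'' + W psi = E psi with ||psi||_{L^2(0,L)} = 1.
   (An H^2 solution of this ODE with continuous W is classical in (0,L) and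
   C^1 up to the boundary; conversely such a function is in H^2.) *)
Definition dirichlet_eigenfunction (L eps : R) (W : R -> R) (E : R)
    (psi dpsi : R -> C) : Prop :=
  cont_on_0L L psi /\ cont_on_0L L dpsi /\
  (forall x, 0 < x < L -> is_derive psi x (dpsi x)) /\
  (forall x, 0 < x < L -> exists d2 : C,
      is_derive dpsi x d2 /\
      (- RtoC (eps ^ 2) * d2 + RtoC (W x) * psi x = RtoC E * psi x)%C) /\
  psi 0 = RtoC 0 /\ psi L = RtoC 0 /\
  RInt (fun x => (Cmod (psi x)) ^ 2) 0 L = 1.

Definition L2norm (psi : R -> C) (a b : R) : R :=
  sqrt (RInt (fun x => (Cmod (psi x)) ^ 2) a b).

(* Main.v *)
Require Import Defs.
From Stdlib Require Import Reals Lra.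
From Coquelicot Require Import Coquelicot.
Open Scope R_scope.

Lemma lip_cont (f : R -> R) : (forall a b, Rabs (f a - f b) <= Rabs (a - b)) -> forall x, continuous f x.
Proof.
  intros H x. apply filterlim_locally. intros e.
  exists e. intros y Hy. unfold ball in *; simpl in *. unfold AbsRing_ball in *; simpl in *.
  unfold abs, minus, plus, opp in *; simpl in *.
  eapply Rle_lt_trans; [apply H|exact Hy].
Qed.

Definition clamp (L x : R) := Rmax 0 (Rmin x L).

Lemma clamp_lip L : 0 <= L -> forall a b, Rabs (clamp L a - clamp L b) <= Rabs (a - b).
Proof.
  intros HL a b. unfold clamp, Rmax, Rmin.
  repeat destruct Rle_dec; repeat destruct Rabs_case_n; unfold Rabs; repeat destruct Rcase_abs; lra.
Qed.

Lemma clamp_in L x : 0 <= L -> 0 <= clamp L x <= L.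
Proof. intros. unfold clamp, Rmax, Rmin. repeat destruct Rle_dec; lra. Qed.

Lemma clamp_id L x : 0 <= x <= L -> clamp L x = x.
Proof. intros. unfold clamp, Rmax, Rmin. repeat destruct Rle_dec; lra. Qed.

Lemma clamp_cont L : 0 <= L -> forall x, continuous (clamp L) x.
Proof. intros. apply lip_cont. apply clamp_lip; auto. Qed.

Lemma within_clamp {V : UniformSpace} L (f : R -> V) : 0 <= L -> cont_on_0L L f ->
  forall x, continuous (fun t => f (clamp L t)) x.
Proof.
  intros HL Hf x. unfold continuous.
  eapply filterlim_comp; [|apply (Hf (clamp L x) (clamp_in L x HL))].
  intros P [d Hd]. exists d. intros y Hy. apply Hd.
  - unfold ball in *; simpl in *. unfold AbsRing_ball in *; simpl in *.
    unfold abs, minus, plus, opp in *; simpl in *.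
    eapply Rle_lt_trans; [apply clamp_lip; auto|]. exact Hy.
  - apply clamp_in; auto.
Qed.

Lemma mvt_open (f df : R -> R) a b : a < b ->
  (forall x, a < x < b -> is_derive f x (df x)) ->
  (forall x, a <= x <= b -> continuous f x) ->
  exists c, a < c < b /\ f b - f a = df c * (b - a).
Proof.
  intros Hab Hd Hc.
  assert (pr1 : forall c, a < c < b -> derivable_pt f c).
  { intros c P. exists (df c). apply is_derive_Reals. apply Hd; auto. }
  assert (pr2 : forall c, a < c < b -> derivable_pt id c).
  { intros c P. apply derivable_pt_id. }
  destruct (MVT f id a b pr1 pr2 Hab) as [c [P Hc']].
  - intros c Hc1. apply continuity_pt_filterlim. apply Hc; auto.
  - intros c Hc1. apply derivable_continuous_pt. apply derivable_pt_id.
  - exists c. split; auto.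
    assert (E1 : derive_pt f c (pr1 c P) = df c).
    { apply derive_pt_eq_0. apply is_derive_Reals. apply Hd; auto. }
    assert (E2 : derive_pt id c (pr2 c P) = 1).
    { apply derive_pt_eq_0. apply derivable_pt_lim_id. }
    rewrite E1, E2 in Hc'. unfold id in Hc'. lra.
Qed.

Lemma mono_deriv (g dg : R -> R) s t : s <= t ->
  (forall x, s < x < t -> is_derive g x (dg x)) ->
  (forall x, s < x < t -> 0 <= dg x) ->
  (forall x, s <= x <= t -> continuous g x) -> g s <= g t.
Proof.
  intros Hst Hd Hp Hc. destruct (Req_dec s t) as [->|Hne]; [lra|].
  destruct (mvt_open g dg s t) as [c [Hc1 Hc2]]; auto; try lra.
  assert (0 <= dg c) by (apply Hp; auto). nra.
Qed.

Lemma deriv_RInt0 (f : R -> R) a : (forall x, continuous f x) ->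
  forall x, is_derive (fun t => RInt f a t) x (f x).
Proof.
  intros Hc x. apply (is_derive_RInt f (fun t => RInt f a t) a x); auto.
  apply filter_forall. intros b. apply (RInt_correct (V:=R_CompleteNormedModule)). apply ex_RInt_continuous. intros; auto.
Qed.

Lemma RInt_cont (f : R -> R) a : (forall x, continuous f x) -> forall x, continuous (fun t => RInt f a t) x.
Proof.
  intros Hc x. apply (ex_derive_continuous (K:=R_AbsRing) (V:=R_NormedModule)). eexists. apply deriv_RInt0; auto.
Qed.

Lemma exRI (f : R -> R) a b : (forall x, continuous f x) -> ex_RInt f a b.
Proof. intros. apply (ex_RInt_continuous (V:=R_CompleteNormedModule)). intros; auto. Qed.

Lemma is_derive_fst (f : R -> C) x l : is_derive f x l -> is_derive (fun t => fst (f t)) x (fst l).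
Proof.
  intros H. unfold is_derive in *.
  eapply filterdiff_ext_lin.
  - apply (filterdiff_comp' f fst x _ fst H). apply filterdiff_linear. apply is_linear_fst.
  - intros y. simpl. reflexivity.
Qed.

Lemma is_derive_snd (f : R -> C) x l : is_derive f x l -> is_derive (fun t => snd (f t)) x (snd l).
Proof.
  intros H. unfold is_derive in *.
  eapply filterdiff_ext_lin.
  - apply (filterdiff_comp' f snd x _ snd H). apply filterdiff_linear. apply is_linear_snd.
  - intros y. simpl. reflexivity.
Qed.

Lemma cont_fst (f : R -> C) x : continuous f x -> continuous (fun t => fst (f t)) x.
Proof. intros H. apply (continuous_comp f fst); auto. apply continuous_fst. Qed.
Lemma cont_snd (f : R -> C) x : continuous f x -> continuous (fun t => snd (f t)) x.
Proof. intros H. apply (continuous_comp f snd); auto. apply continuous_snd. Qed.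

Lemma is_derive_eq (f : R -> R) (x l lp : R) : is_derive f x l -> @eq R l lp -> is_derive f x lp.
Proof. intros H <-; auto. Qed.
Lemma dmul (f g : R -> R) x a b : is_derive f x a -> is_derive g x b -> is_derive (fun t => f t * g t) x (a * g x + f x * b).
Proof. intros. apply (is_derive_mult f g x a b); auto. intros; apply Rmult_comm. Qed.
Lemma dplus (f g : R -> R) x a b : is_derive f x a -> is_derive g x b -> is_derive (fun t => f t + g t) x (a + b).
Proof. intros. apply (is_derive_plus f g x a b); auto. Qed.
Lemma dminus (f g : R -> R) x a b : is_derive f x a -> is_derive g x b -> is_derive (fun t => f t - g t) x (a - b).
Proof. intros. apply (is_derive_minus f g x a b); auto. Qed.
Lemma dconst (c x : R) : is_derive (fun _ => c) x 0.
Proof. apply (is_derive_const c x). Qed.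
Lemma did (x : R) : is_derive (fun t => t) x 1.
Proof. apply (is_derive_id x). Qed.
Lemma cmul (f g : R -> R) x : continuous f x -> continuous g x -> continuous (fun t => f t * g t) x.
Proof. intros. apply (continuous_mult f g x); auto. Qed.
Lemma cplus (f g : R -> R) x : continuous f x -> continuous g x -> continuous (fun t => f t + g t) x.
Proof. intros. apply (continuous_plus f g x); auto. Qed.
Lemma cminus (f g : R -> R) x : continuous f x -> continuous g x -> continuous (fun t => f t - g t) x.
Proof. intros. apply (continuous_minus f g x); auto. Qed.
Lemma cconst (c x : R) : continuous (fun _ : R => c) x.
Proof. apply (continuous_const c x). Qed.
Lemma cid (x : R) : continuous (fun t : R => t) x.
Proof. apply (continuous_id x). Qed.
Lemma exp_le_exp' x y : x <= y -> exp x <= exp y.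
Proof. intros [H| ->]. apply Rlt_le, exp_increasing; auto. lra. Qed.

Section ODE.
Variables (L eps E : R) (u v du dv W dW : R -> R).
Hypothesis HL : 0 < L.
Hypothesis Heps : 0 < eps.
Hypothesis Hcu : forall x, continuous u x.
Hypothesis Hcv : forall x, continuous v x.
Hypothesis Hcdu : forall x, continuous du x.
Hypothesis Hcdv : forall x, continuous dv x.
Hypothesis HcW : forall x, continuous W x.
Hypothesis HcdW : forall x, continuous dW x.
Hypothesis Hd : forall x, 0 < x < L ->
  is_derive u x (du x) /\ is_derive v x (dv x) /\ is_derive W x (dW x).
Hypothesis H2 : forall x, 0 < x < L -> exists a b : R,
  is_derive du x a /\ is_derive dv x b /\ eps^2 * a = (W x - E) * u x /\ eps^2 * b = (W x - E) * v x.

Definition rho x := u x * u x + v x * v x.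
Definition FF x := eps^2 * (du x * du x + dv x * dv x) + (E - W x) * rho x.
Definition rho1 x := 2 * (u x * du x + v x * dv x).

Lemma rho_cont x : continuous rho x.
Proof. unfold rho. apply cplus; apply cmul; auto. Qed.
Lemma rho1_cont x : continuous rho1 x.
Proof. unfold rho1. apply cmul. apply cconst. apply cplus; apply cmul; auto. Qed.
Lemma FF_cont x : continuous FF x.
Proof. unfold FF. apply cplus. apply cmul. apply cconst. apply cplus; apply cmul; auto.
  apply cmul. apply cminus; auto. apply cconst. apply rho_cont. Qed.

Lemma rho_ge0 x : 0 <= rho x.
Proof. unfold rho. assert (0 <= u x * u x) by apply Rle_0_sqr. assert (0 <= v x * v x) by apply Rle_0_sqr. lra. Qed.

Lemma rho_deriv x : 0 < x < L -> is_derive rho x (rho1 x).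
Proof.
  intros Hx. destruct (Hd x Hx) as [Hu [Hv _]]. unfold rho, rho1.
  eapply is_derive_eq; [apply dplus; apply dmul; eauto|]. ring.
Qed.

Lemma FF_deriv x : 0 < x < L -> is_derive FF x (- dW x * rho x).
Proof.
  intros Hx. destruct (Hd x Hx) as [Hu [Hv HW]]. destruct (H2 x Hx) as [a [b [Ha [Hb [Ea Eb]]]]].
  unfold FF.
  eapply is_derive_eq. apply dplus. apply dmul. apply dconst. apply dplus; apply dmul; eauto.
  apply dmul. apply dminus. apply dconst. eauto. apply rho_deriv; auto.
  unfold rho1, rho.
  assert (Ea' : a = (W x - E) * u x / eps^2) by (apply (Rmult_eq_reg_l (eps^2)); [rewrite Ea; field; lra | apply pow_nonzero; lra]).
  assert (Eb' : b = (W x - E) * v x / eps^2) by (apply (Rmult_eq_reg_l (eps^2)); [rewrite Eb; field; lra | apply pow_nonzero; lra]).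
  subst a b. field. lra.
Qed.

Lemma rho1_deriv x : 0 < x < L -> exists r2 : R, is_derive rho1 x r2 /\
  eps^2 * r2 = 2 * eps^2 * (du x * du x + dv x * dv x) + 2 * (W x - E) * rho x.
Proof.
  intros Hx. destruct (Hd x Hx) as [Hu [Hv HW]]. destruct (H2 x Hx) as [a [b [Ha [Hb [Ea Eb]]]]].
  eexists. split. unfold rho1. apply dmul. apply dconst. apply dplus; apply dmul; eauto.
  unfold rho.
  assert (Ea' : a = (W x - E) * u x / eps^2) by (apply (Rmult_eq_reg_l (eps^2)); [rewrite Ea; field; lra | apply pow_nonzero; lra]).
  assert (Eb' : b = (W x - E) * v x / eps^2) by (apply (Rmult_eq_reg_l (eps^2)); [rewrite Eb; field; lra | apply pow_nonzero; lra]).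
  subst a b. field. lra.
Qed.

Lemma tool (s t c : R) (phi dphi : R -> R) : 0 <= s -> s <= t -> t <= L ->
  (forall x, continuous phi x) ->
  (forall x, s < x < t -> is_derive phi x (dphi x)) ->
  (forall x, s < x < t -> 0 <= dphi x) ->
  (forall x, s < x < t -> dphi x * (E - W x) - phi x * dW x >= c) ->
  phi t * FF t - phi s * FF s >= c * RInt rho s t.
Proof.
  intros H0s Hst HtL Hpc Hpd Hpp Ha.
  set (G := fun x => phi x * FF x - c * RInt rho s x).
  assert (Hm : G s <= G t).
  { apply (mono_deriv G (fun x => dphi x * FF x + phi x * (- dW x * rho x) - c * rho x)); auto.
    - intros x Hx. unfold G. apply dminus. apply dmul; auto. apply FF_deriv; lra.
      apply is_derive_scal. apply deriv_RInt0. apply rho_cont.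
    - intros x Hx. specialize (Ha x Hx). specialize (Hpp x Hx).
      assert (0 <= rho x) by apply rho_ge0.
      assert (FF x >= (E - W x) * rho x).
      { unfold FF. assert (0 <= eps^2 * (du x * du x + dv x * dv x)).
        apply Rmult_le_pos. apply pow_le; lra. assert (0 <= du x * du x) by apply Rle_0_sqr.
        assert (0 <= dv x * dv x) by apply Rle_0_sqr. lra. lra. }
      assert (dphi x * FF x >= dphi x * ((E - W x) * rho x)).
      { apply Rle_ge. apply Rmult_le_compat_l; lra. }
      assert (0 <= (dphi x * (E - W x) - phi x * dW x - c) * rho x) by (apply Rmult_le_pos; lra).
      lra.
    - intros x _. unfold G. apply cminus. apply cmul; auto. apply FF_cont.
      apply cmul. apply cconst. apply RInt_cont. apply rho_cont. }
  unfold G in Hm. rewrite RInt_point in Hm. unfold zero in Hm; simpl in Hm. lra.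
Qed.

Definition th (j1 j2 x : R) := ((x - j1) * (x - j1)) * ((j2 - x) * (j2 - x)).
Definition th1 (j1 j2 x : R) := 2 * (x - j1) * ((j2 - x) * (j2 - x)) - 2 * ((x - j1) * (x - j1)) * (j2 - x).
Definition th2 (j1 j2 x : R) := 2 * ((j2 - x) * (j2 - x)) - 8 * (x - j1) * (j2 - x) + 2 * ((x - j1) * (x - j1)).

Lemma dxa (a x : R) : is_derive (fun t => t - a) x 1.
Proof. eapply is_derive_eq. apply dminus. apply did. apply dconst. ring. Qed.
Lemma dax (a x : R) : is_derive (fun t => a - t) x (-1).
Proof. eapply is_derive_eq. apply dminus. apply dconst. apply did. ring. Qed.

Lemma th_deriv j1 j2 x : is_derive (th j1 j2) x (th1 j1 j2 x).
Proof. unfold th, th1. eapply is_derive_eq. apply dmul; apply dmul; [apply dxa|apply dxa|apply dax|apply dax].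
  cbv beta. ring. Qed.
Lemma th1_deriv j1 j2 x : is_derive (th1 j1 j2) x (th2 j1 j2 x).
Proof. unfold th1, th2. eapply is_derive_eq.
  apply dminus; apply dmul.
  apply dmul. apply dconst. apply dxa.
  apply dmul; apply dax.
  apply dmul. apply dconst. apply dmul; apply dxa.
  apply dax.
  cbv beta. ring. Qed.
Lemma th_cont j1 j2 x : continuous (th j1 j2) x.
Proof. apply (ex_derive_continuous (K:=R_AbsRing) (V:=R_NormedModule)). eexists. apply th_deriv. Qed.
Lemma th1_cont j1 j2 x : continuous (th1 j1 j2) x.
Proof. apply (ex_derive_continuous (K:=R_AbsRing) (V:=R_NormedModule)). eexists. apply th1_deriv. Qed.

Lemma local_bound j1 j2 B : 0 <= j1 -> j1 < j2 -> j2 <= L ->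
  (forall x, j1 < x < j2 -> 2 * th j1 j2 x * (E - W x) + eps^2 / 2 * th2 j1 j2 x <= B) ->
  RInt (fun x => th j1 j2 x * FF x) j1 j2 <= B * RInt rho j1 j2.
Proof.
  intros H1 H12 H2L HB.
  set (Q := fun x => RInt (fun y => th j1 j2 y * FF y) j1 x
     - eps^2 / 2 * (th j1 j2 x * rho1 x - th1 j1 j2 x * rho x) - B * RInt rho j1 x).
  assert (Hm : (fun x => - Q x) j1 <= (fun x => - Q x) j2).
  { apply (mono_deriv (fun x => - Q x) (fun x => - ((2 * th j1 j2 x * (E - W x) + eps^2 / 2 * th2 j1 j2 x - B) * rho x))).
    - lra.
    - intros x Hx. destruct (rho1_deriv x ltac:(lra)) as [r2 [Hr2 Er2]].
      unfold Q. eapply is_derive_eq. apply (is_derive_opp (K:=R_AbsRing) (V:=R_NormedModule)).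
      apply dminus. apply dminus. apply deriv_RInt0. intros y. apply cmul. apply th_cont. apply FF_cont.
      apply is_derive_scal. apply dminus; apply dmul. apply th_deriv. eauto. apply th1_deriv. apply rho_deriv; lra.
      apply is_derive_scal. apply deriv_RInt0. apply rho_cont.
      unfold opp; simpl. unfold FF.
      assert (r2 = (2 * eps ^ 2 * (du x * du x + dv x * dv x) + 2 * (W x - E) * rho x) / eps^2).
      { rewrite <- Er2. field. lra. }
      subst r2. field. lra.
    - intros x Hx. specialize (HB x Hx). assert (0 <= rho x) by apply rho_ge0.
      assert (0 <= (B - (2 * th j1 j2 x * (E - W x) + eps ^ 2 / 2 * th2 j1 j2 x)) * rho x) by (apply Rmult_le_pos; lra).
      lra.
    - intros x _. unfold Q. apply (continuous_opp (K:=R_AbsRing) (V:=R_NormedModule)).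
      apply cminus. apply cminus. apply RInt_cont. intros y. apply cmul. apply th_cont. apply FF_cont.
      apply cmul. apply cconst. apply cminus; apply cmul. apply th_cont. apply rho1_cont. apply th1_cont. apply rho_cont.
      apply cmul. apply cconst. apply RInt_cont. apply rho_cont. }
  simpl in Hm. unfold Q in Hm. rewrite !RInt_point in Hm. unfold zero in Hm; simpl in Hm.
  assert (E1 : th j1 j2 j1 = 0) by (unfold th; ring).
  assert (E2 : th j1 j2 j2 = 0) by (unfold th; ring).
  assert (E3 : th1 j1 j2 j1 = 0) by (unfold th1; ring).
  assert (E4 : th1 j1 j2 j2 = 0) by (unfold th1; ring).
  rewrite E1, E2, E3, E4 in Hm. lra.
Qed.


Hypothesis Hb0 : u 0 = 0 /\ v 0 = 0.
Hypothesis HbL : u L = 0 /\ v L = 0.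

Lemma FF0 : FF 0 = eps^2 * (du 0 * du 0 + dv 0 * dv 0).
Proof. unfold FF, rho. destruct Hb0 as [-> ->]. ring. Qed.
Lemma FFL : FF L = eps^2 * (du L * du L + dv L * dv L).
Proof. unfold FF, rho. destruct HbL as [-> ->]. ring. Qed.
Lemma FF0_ge0 : 0 <= FF 0.
Proof. rewrite FF0. apply Rmult_le_pos. apply pow_le; lra.
  assert (0 <= du 0 * du 0) by apply Rle_0_sqr. assert (0 <= dv 0 * dv 0) by apply Rle_0_sqr. lra. Qed.
Lemma FFL_ge0 : 0 <= FF L.
Proof. rewrite FFL. apply Rmult_le_pos. apply pow_le; lra.
  assert (0 <= du L * du L) by apply Rle_0_sqr. assert (0 <= dv L * dv L) by apply Rle_0_sqr. lra. Qed.

Definition chi (r : R) := Rmin 1 (Rmax 0 r).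
Lemma chi_lip a b : Rabs (chi a - chi b) <= Rabs (a - b).
Proof. unfold chi, Rmin, Rmax. repeat destruct Rle_dec; unfold Rabs; repeat destruct Rcase_abs; lra. Qed.
Lemma chi_bounds r : 0 <= chi r <= 1.
Proof. unfold chi, Rmin, Rmax. repeat destruct Rle_dec; lra. Qed.
Lemma chi_1 r : 1 <= r -> chi r = 1.
Proof. unfold chi, Rmin, Rmax. repeat destruct Rle_dec; lra. Qed.
Lemma chi_0 r : r <= 0 -> chi r = 0.
Proof. unfold chi, Rmin, Rmax. repeat destruct Rle_dec; lra. Qed.

Definition kap (k0 tau x : R) := k0 * chi ((E - W x) / tau).
Definition Kf (k0 tau x : R) := RInt (kap k0 tau) 0 x.

Lemma kap_cont k0 tau x : continuous (kap k0 tau) x.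
Proof. unfold kap. apply cmul. apply cconst.
  apply (continuous_comp (fun y => (E - W y) / tau) chi). unfold Rdiv. apply cmul. apply cminus. apply cconst. auto. apply cconst.
  apply lip_cont. apply chi_lip. Qed.

Lemma Kf_bounds k0 tau x : 0 <= k0 -> 0 <= x -> 0 <= Kf k0 tau x <= k0 * x.
Proof.
  intros Hk Hx. unfold Kf. split.
  - apply RInt_ge_0; auto. apply exRI. apply kap_cont. intros y _. unfold kap. pose proof (chi_bounds ((E - W y)/tau)). nra.
  - replace (k0 * x) with (RInt (fun _ => k0) 0 x).
    apply RInt_le; auto. apply exRI. apply kap_cont. apply exRI. intros; apply cconst.
    intros y _. unfold kap. pose proof (chi_bounds ((E - W y)/tau)). nra.
    rewrite RInt_const. unfold scal; simpl. unfold mult; simpl. ring.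
Qed.

Lemma mult_tool sg tau c k0 M1 D s t : (sg = 1 \/ sg = -1) -> 0 < tau -> 0 < c -> 0 <= M1 -> 0 <= D ->
  k0 * tau >= 2 * D -> 0 < k0 ->
  (forall x, 0 <= x <= L -> Rabs (W x) <= M1 /\ Rabs (dW x) <= D) -> - M1 <= E ->
  0 <= s -> s <= t -> t <= L ->
  (forall x, s <= x <= t -> W x > E - tau -> sg * dW x <= - c) ->
  sg * exp (sg * Kf k0 tau t) * FF t - sg * exp (sg * Kf k0 tau s) * FF s >=
  exp (- (k0 * L)) * Rmin ((k0 / 2) / (1 + (M1 + 1) / tau)) (c / (M1 + tau + 1)) * (Rabs E + 1) * RInt rho s t.
Proof.
  intros Hsg Htau Hc HM1 HD Hk0 Hk0' Hbd HE Hs Hst Ht Hcond.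
  set (m := Rmin ((k0 / 2) / (1 + (M1 + 1) / tau)) (c / (M1 + tau + 1))).
  assert (Hm0 : 0 < m).
  { unfold m. apply Rmin_glb_lt; apply Rdiv_lt_0_compat; try lra.
    assert (0 <= (M1 + 1) / tau) by (apply Rdiv_le_0_compat; lra). lra. }
  apply (tool s t _ (fun x => sg * exp (sg * Kf k0 tau x)) (fun x => kap k0 tau x * exp (sg * Kf k0 tau x))); auto.
  - intros x. apply cmul. apply cconst. apply continuous_exp_comp. apply cmul. apply cconst.
    apply RInt_cont. apply kap_cont.
  - intros x Hx. eapply is_derive_eq. apply is_derive_scal.
    apply (is_derive_comp exp (fun y => sg * Kf k0 tau y)). apply is_derive_exp.
    apply is_derive_scal. apply deriv_RInt0. apply kap_cont.
    unfold scal; simpl. unfold mult; simpl.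
    assert (sg * sg = 1) by (destruct Hsg; subst; lra). 
    transitivity ((sg * sg) * (kap k0 tau x * exp (sg * Kf k0 tau x))); [ring|]. rewrite H. ring.
  - intros x Hx. apply Rmult_le_pos. unfold kap. pose proof (chi_bounds ((E - W x)/tau)). nra.
    apply Rlt_le, exp_pos.
  - intros x Hx.
    assert (HK := Kf_bounds k0 tau x ltac:(lra) ltac:(lra)).
    assert (Hexp : exp (- (k0 * L)) <= exp (sg * Kf k0 tau x)).
    { apply exp_le_exp'. assert (k0 * x <= k0 * L) by (apply Rmult_le_compat_l; lra).
      destruct Hsg; subst; lra. }
    destruct (Hbd x ltac:(lra)) as [HW HdW].
    apply Rabs_le_between in HW. apply Rabs_le_between in HdW.
    assert (Hin : kap k0 tau x * (E - W x) - sg * dW x >= m * (Rabs E + 1)).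
    { destruct (Rle_lt_dec tau (E - W x)) as [Hbig|Hsmall].
      - unfold kap. rewrite chi_1. 2:{ apply (Rmult_le_reg_r tau); auto. unfold Rdiv. rewrite Rmult_assoc, Rinv_l; lra. }
        assert (HEa : Rabs E + 1 <= (E - W x) * (1 + (M1 + 1) / tau)).
        { assert ((M1 + 1) <= (E - W x) * ((M1 + 1) / tau)).
          { unfold Rdiv. replace (M1 + 1) with (tau * ((M1 + 1) * / tau)) at 1 by (field; lra).
            apply Rmult_le_compat_r; [|lra]. apply Rmult_le_pos; [lra|]. apply Rlt_le, Rinv_0_lt_compat; lra. }
          unfold Rabs; destruct Rcase_abs; nra. }
        assert (Hsd : sg * dW x <= D) by (destruct Hsg; subst; lra).
        assert (Hhalf : k0 * (E - W x) - sg * dW x >= k0 / 2 * (E - W x)) by nra.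
        assert (m <= (k0 / 2) / (1 + (M1 + 1) / tau)) by (unfold m; apply Rmin_l).
        assert (Hpos : 0 < 1 + (M1 + 1) / tau) by (assert (0 <= (M1 + 1) / tau) by (apply Rdiv_le_0_compat; lra); lra).
        assert (m * (Rabs E + 1) <= (k0 / 2) / (1 + (M1 + 1) / tau) * ((E - W x) * (1 + (M1 + 1) / tau))).
        { apply Rmult_le_compat; try lra. pose proof (Rabs_pos E); lra. }
        replace ((k0 / 2) / (1 + (M1 + 1) / tau) * ((E - W x) * (1 + (M1 + 1) / tau))) with (k0 / 2 * (E - W x)) in H0 by (field; lra).
        lra.
      - assert (Hgt : W x > E - tau) by lra.
        assert (Hsd := Hcond x ltac:(lra) Hgt).
        assert (Hk : kap k0 tau x * (E - W x) >= 0).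
        { unfold kap. destruct (Rle_lt_dec (E - W x) 0).
          - rewrite chi_0. lra. apply (Rmult_le_reg_r tau); auto. unfold Rdiv. rewrite Rmult_assoc, Rinv_l; lra.
          - pose proof (chi_bounds ((E - W x)/tau)). apply Rle_ge. apply Rmult_le_pos; nra. }
        assert (HEb : Rabs E + 1 <= M1 + tau + 1) by (unfold Rabs; destruct Rcase_abs; lra).
        assert (m <= c / (M1 + tau + 1)) by (unfold m; apply Rmin_r).
        assert (m * (Rabs E + 1) <= c / (M1 + tau + 1) * (M1 + tau + 1)).
        { apply Rmult_le_compat; try lra. pose proof (Rabs_pos E); lra. }
        replace (c / (M1 + tau + 1) * (M1 + tau + 1)) with c in H0 by (field; lra).
        lra. }
    assert (HE0 : 0 <= m * (Rabs E + 1)) by (pose proof (Rabs_pos E); nra).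
    replace (kap k0 tau x * exp (sg * Kf k0 tau x) * (E - W x) - sg * exp (sg * Kf k0 tau x) * dW x)
      with (exp (sg * Kf k0 tau x) * (kap k0 tau x * (E - W x) - sg * dW x)) by ring.
    replace (exp (- (k0 * L)) * m * (Rabs E + 1)) with (exp (- (k0 * L)) * (m * (Rabs E + 1))) by ring.
    apply Rle_ge. apply Rmult_le_compat; try lra. apply Rlt_le, exp_pos.
Qed.


Definition Cst (tau c k0 M1 : R) := exp (- (k0 * L)) * (exp (- (k0 * L)) * Rmin ((k0 / 2) / (1 + (M1 + 1) / tau)) (c / (M1 + tau + 1))).

Lemma Cst_pos tau c k0 M1 : 0 < tau -> 0 < c -> 0 <= M1 -> 0 < k0 -> 0 < Cst tau c k0 M1.
Proof.
  intros. unfold Cst. apply Rmult_lt_0_compat. apply exp_pos. apply Rmult_lt_0_compat. apply exp_pos.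
  apply Rmin_glb_lt; apply Rdiv_lt_0_compat; try lra.
  assert (0 <= (M1 + 1) / tau) by (apply Rdiv_le_0_compat; lra). lra.
Qed.

Lemma left_bound tau c k0 M1 D z : 0 < tau -> 0 < c -> 0 <= M1 -> 0 <= D ->
  k0 * tau >= 2 * D -> 0 < k0 ->
  (forall x, 0 <= x <= L -> Rabs (W x) <= M1 /\ Rabs (dW x) <= D) -> - M1 <= E ->
  0 <= z <= L ->
  (forall x, 0 <= x <= z -> W x > E - tau -> dW x <= - c) ->
  FF z >= Cst tau c k0 M1 * (Rabs E + 1) * RInt rho 0 z.
Proof.
  intros Htau Hc HM1 HD Hk Hk0 Hbd HE Hz Hcond.
  assert (H := mult_tool 1 tau c k0 M1 D 0 z (or_introl eq_refl) Htau Hc HM1 HD Hk Hk0 Hbd HE ltac:(lra) ltac:(lra) ltac:(lra)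
    ltac:(intros x Hx Hw; specialize (Hcond x Hx Hw); lra)).
  unfold Kf in H. rewrite RInt_point in H. unfold zero in H; simpl in H.
  rewrite Rmult_0_r, exp_0 in H.
  pose proof FF0_ge0.
  set (m := Rmin ((k0 / 2) / (1 + (M1 + 1) / tau)) (c / (M1 + tau + 1))) in *.
  assert (Hm0 : 0 < m).
  { unfold m. apply Rmin_glb_lt; apply Rdiv_lt_0_compat; try lra.
    assert (0 <= (M1 + 1) / tau) by (apply Rdiv_le_0_compat; lra). lra. }
  assert (Hr : 0 <= RInt rho 0 z) by (apply RInt_ge_0; [lra| apply exRI; apply rho_cont | intros; apply rho_ge0]).
  set (X := exp (- (k0 * L)) * m * (Rabs E + 1) * RInt rho 0 z) in *.
  assert (HX : 0 <= X).
  { unfold X. apply Rmult_le_pos; auto. apply Rmult_le_pos. apply Rmult_le_pos. apply Rlt_le, exp_pos. lra. pose proof (Rabs_pos E); lra. }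
  assert (HK := Kf_bounds k0 tau z ltac:(lra) ltac:(lra)).
  set (K := RInt (kap k0 tau) 0 z) in *. unfold Kf in HK. fold K in HK.
  assert (Hex : exp K <= exp (k0 * L)) by (apply exp_le_exp'; assert (k0 * z <= k0 * L) by (apply Rmult_le_compat_l; lra); lra).
  assert (HF : exp K * FF z >= X)  by (rewrite !Rmult_1_l in H; lra).
  assert (HFz : 0 <= FF z).
  { destruct (Rle_lt_dec 0 (FF z)); auto. assert (exp K * FF z < 0). apply Rmult_pos_neg; auto. apply exp_pos. lra. }
  assert (HX2 : X <= exp (k0 * L) * FF z) by (assert (exp K * FF z <= exp (k0 * L) * FF z) by (apply Rmult_le_compat_r; lra); lra).
  unfold Cst. fold m.
  replace (exp (- (k0 * L)) * (exp (- (k0 * L)) * m) * (Rabs E + 1) * RInt rho 0 z) with (exp (- (k0 * L)) * X) by (unfold X; ring).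
  apply Rle_ge. apply (Rmult_le_reg_l (exp (k0 * L))). apply exp_pos.
  rewrite <- Rmult_assoc, <- exp_plus. replace (k0 * L + - (k0 * L)) with 0 by ring. rewrite exp_0. lra.
Qed.

Lemma right_bound tau c k0 M1 D z : 0 < tau -> 0 < c -> 0 <= M1 -> 0 <= D ->
  k0 * tau >= 2 * D -> 0 < k0 ->
  (forall x, 0 <= x <= L -> Rabs (W x) <= M1 /\ Rabs (dW x) <= D) -> - M1 <= E ->
  0 <= z <= L ->
  (forall x, z <= x <= L -> W x > E - tau -> dW x >= c) ->
  FF z >= Cst tau c k0 M1 * (Rabs E + 1) * RInt rho z L.
Proof.
  intros Htau Hc HM1 HD Hk Hk0 Hbd HE Hz Hcond.
  assert (H := mult_tool (-1) tau c k0 M1 D z L (or_intror eq_refl) Htau Hc HM1 HD Hk Hk0 Hbd HE ltac:(lra) ltac:(lra) ltac:(lra)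
    ltac:(intros x Hx Hw; specialize (Hcond x Hx Hw); lra)).
  pose proof FFL_ge0.
  set (m := Rmin ((k0 / 2) / (1 + (M1 + 1) / tau)) (c / (M1 + tau + 1))) in *.
  assert (Hm0 : 0 < m).
  { unfold m. apply Rmin_glb_lt; apply Rdiv_lt_0_compat; try lra.
    assert (0 <= (M1 + 1) / tau) by (apply Rdiv_le_0_compat; lra). lra. }
  assert (Hr : 0 <= RInt rho z L) by (apply RInt_ge_0; [lra| apply exRI; apply rho_cont | intros; apply rho_ge0]).
  set (X := exp (- (k0 * L)) * m * (Rabs E + 1) * RInt rho z L) in *.
  assert (HX : 0 <= X).
  { unfold X. apply Rmult_le_pos; auto. apply Rmult_le_pos. apply Rmult_le_pos. apply Rlt_le, exp_pos. lra. pose proof (Rabs_pos E); lra. }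
  assert (HK := Kf_bounds k0 tau z ltac:(lra) ltac:(lra)).
  set (K := Kf k0 tau z) in *.
  assert (Hex : exp (-1 * K) <= 1) by (rewrite <- exp_0; apply exp_le_exp'; lra).
  assert (HL0 : 0 <= exp (-1 * Kf k0 tau L) * FF L) by (apply Rmult_le_pos; auto; apply Rlt_le, exp_pos).
  assert (HF : exp (-1 * K) * FF z >= X) by lra.
  assert (HFz : 0 <= FF z).
  { destruct (Rle_lt_dec 0 (FF z)); auto. assert (exp (-1 * K) * FF z < 0). apply Rmult_pos_neg; auto. apply exp_pos. lra. }
  assert (HX2 : X <= FF z) by (assert (exp (-1 * K) * FF z <= 1 * FF z) by (apply Rmult_le_compat_r; lra); lra).
  unfold Cst. fold m.
  replace (exp (- (k0 * L)) * (exp (- (k0 * L)) * m) * (Rabs E + 1) * RInt rho z L) with (exp (- (k0 * L)) * X) by (unfold X; ring).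
  assert (exp (- (k0 * L)) <= 1) by (rewrite <- exp_0; apply exp_le_exp'; assert (0 <= k0 * L) by (apply Rmult_le_pos; lra); lra).
  assert (exp (- (k0 * L)) * X <= 1 * X) by (apply Rmult_le_compat_r; lra). lra.
Qed.


Lemma mass_left tau c k0 M1 D a l B0 : 0 < tau -> 0 < c -> 0 <= M1 -> 0 <= D ->
  k0 * tau >= 2 * D -> 0 < k0 ->
  (forall x, 0 <= x <= L -> Rabs (W x) <= M1 /\ Rabs (dW x) <= D) -> - M1 <= E ->
  0 <= a -> 0 < l -> a + l <= L ->
  (forall x, 0 <= x <= a + l -> W x > E - tau -> dW x <= - c) ->
  (forall x, a < x < a + l -> 2 * th a (a + l) x * (E - W x) + eps^2 / 2 * th2 a (a + l) x <= B0 * (Rabs E + 1)) ->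
  Cst tau c k0 M1 * RInt rho 0 a * (l^5 / 30) <= B0 * RInt rho a (a + l).
Proof.
  intros Htau Hc HM1 HD Hk Hk0 Hbd HE Ha Hl HaL Hcond HB.
  assert (HE1 : 0 < Rabs E + 1) by (pose proof (Rabs_pos E); lra).
  assert (H1 := local_bound a (a + l) (B0 * (Rabs E + 1)) Ha ltac:(lra) HaL HB).
  set (K := Cst tau c k0 M1 * (Rabs E + 1) * RInt rho 0 a).
  assert (H2' : RInt (fun x => K * th a (a + l) x) a (a + l) <= RInt (fun x => th a (a + l) x * FF x) a (a + l)).
  { apply RInt_le. lra. apply exRI. intros; apply cmul. apply cconst. apply th_cont.
    apply exRI. intros; apply cmul. apply th_cont. apply FF_cont.
    intros x Hx.
    assert (HF := left_bound tau c k0 M1 D x Htau Hc HM1 HD Hk Hk0 Hbd HE ltac:(lra)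
      ltac:(intros y Hy Hw; apply Hcond; auto; lra)).
    assert (Hch : RInt rho 0 x = RInt rho 0 a + RInt rho a x).
    { symmetry. apply (RInt_Chasles (V:=R_CompleteNormedModule)); apply exRI; apply rho_cont. }
    assert (0 <= RInt rho a x) by (apply RInt_ge_0; [lra| apply exRI; apply rho_cont | intros; apply rho_ge0]).
    assert (0 <= Cst tau c k0 M1) by (apply Rlt_le, Cst_pos; lra).
    assert (HFK : K <= FF x).
    { unfold K. rewrite Hch in HF. assert (0 <= Cst tau c k0 M1 * (Rabs E + 1)) by (apply Rmult_le_pos; lra).
      assert (Cst tau c k0 M1 * (Rabs E + 1) * RInt rho 0 a <= Cst tau c k0 M1 * (Rabs E + 1) * (RInt rho 0 a + RInt rho a x)) by (apply Rmult_le_compat_l; lra).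
      lra. }
    assert (0 <= th a (a + l) x) by (unfold th; apply Rmult_le_pos; apply Rle_0_sqr).
    rewrite (Rmult_comm K). apply Rmult_le_compat_l; auto. }
  assert (H3 : RInt (fun x => K * th a (a + l) x) a (a + l) = K * (l^5 / 30)).
  { transitivity (K * RInt (th a (a + l)) a (a + l)).
    { change (RInt (fun x => scal K (th a (a + l) x)) a (a + l) = scal K (RInt (th a (a + l)) a (a + l))).
      apply (RInt_scal (V:=R_CompleteNormedModule)). apply exRI. apply th_cont. }
    f_equal.
    apply is_RInt_unique.
    set (P := fun x => l * l * ((x - a) * (x - a) * (x - a)) / 3 - l * ((x - a) * (x - a) * (x - a) * (x - a)) / 2
                       + (x - a) * (x - a) * (x - a) * (x - a) * (x - a) / 5).
    replace (l ^ 5 / 30) with (minus (P (a + l)) (P a)).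
    apply (is_RInt_derive (V:=R_CompleteNormedModule)).
    - intros x _. unfold P, th. eapply is_derive_eq.
      apply dplus. apply dminus.
      unfold Rdiv. apply dmul. apply dmul. apply dconst. apply dmul. apply dmul. apply dxa. apply dxa. apply dxa. apply dconst.
      apply dmul. apply dmul. apply dconst. apply dmul. apply dmul. apply dmul. apply dxa. apply dxa. apply dxa. apply dxa. apply dconst.
      apply dmul. apply dmul. apply dmul. apply dmul. apply dmul. apply dxa. apply dxa. apply dxa. apply dxa. apply dxa. apply dconst.
      cbv beta. field.
    - intros; apply th_cont.
    - unfold P, minus, plus, opp; simpl. field. }
  assert (Hfin : K * (l ^ 5 / 30) <= B0 * (Rabs E + 1) * RInt rho a (a + l)) by lra.
  unfold K in Hfin.
  apply (Rmult_le_reg_r (Rabs E + 1)); auto.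
  replace (Cst tau c k0 M1 * RInt rho 0 a * (l ^ 5 / 30) * (Rabs E + 1)) with (Cst tau c k0 M1 * (Rabs E + 1) * RInt rho 0 a * (l ^ 5 / 30)) by ring.
  replace (B0 * RInt rho a (a + l) * (Rabs E + 1)) with (B0 * (Rabs E + 1) * RInt rho a (a + l)) by ring.
  exact Hfin.
Qed.

Lemma mass_right tau c k0 M1 D a l B0 : 0 < tau -> 0 < c -> 0 <= M1 -> 0 <= D ->
  k0 * tau >= 2 * D -> 0 < k0 ->
  (forall x, 0 <= x <= L -> Rabs (W x) <= M1 /\ Rabs (dW x) <= D) -> - M1 <= E ->
  0 <= a -> 0 < l -> a + l <= L ->
  (forall x, a <= x <= L -> W x > E - tau -> dW x >= c) ->
  (forall x, a < x < a + l -> 2 * th a (a + l) x * (E - W x) + eps^2 / 2 * th2 a (a + l) x <= B0 * (Rabs E + 1)) ->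
  Cst tau c k0 M1 * RInt rho (a + l) L * (l^5 / 30) <= B0 * RInt rho a (a + l).
Proof.
  intros Htau Hc HM1 HD Hk Hk0 Hbd HE Ha Hl HaL Hcond HB.
  assert (HE1 : 0 < Rabs E + 1) by (pose proof (Rabs_pos E); lra).
  assert (H1 := local_bound a (a + l) (B0 * (Rabs E + 1)) Ha ltac:(lra) HaL HB).
  set (K := Cst tau c k0 M1 * (Rabs E + 1) * RInt rho (a + l) L).
  assert (H2' : RInt (fun x => K * th a (a + l) x) a (a + l) <= RInt (fun x => th a (a + l) x * FF x) a (a + l)).
  { apply RInt_le. lra. apply exRI. intros; apply cmul. apply cconst. apply th_cont.
    apply exRI. intros; apply cmul. apply th_cont. apply FF_cont.
    intros x Hx.
    assert (HF := right_bound tau c k0 M1 D x Htau Hc HM1 HD Hk Hk0 Hbd HE ltac:(lra)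
      ltac:(intros y Hy Hw; apply Hcond; auto; lra)).
    assert (Hch : RInt rho x L = RInt rho x (a + l) + RInt rho (a + l) L).
    { symmetry. apply (RInt_Chasles (V:=R_CompleteNormedModule)); apply exRI; apply rho_cont. }
    assert (0 <= RInt rho x (a + l)) by (apply RInt_ge_0; [lra| apply exRI; apply rho_cont | intros; apply rho_ge0]).
    assert (0 <= Cst tau c k0 M1) by (apply Rlt_le, Cst_pos; lra).
    assert (HFK : K <= FF x).
    { unfold K. rewrite Hch in HF. assert (0 <= Cst tau c k0 M1 * (Rabs E + 1)) by (apply Rmult_le_pos; lra).
      assert (Cst tau c k0 M1 * (Rabs E + 1) * RInt rho (a + l) L <= Cst tau c k0 M1 * (Rabs E + 1) * (RInt rho x (a + l) + RInt rho (a + l) L)) by (apply Rmult_le_compat_l; lra).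
      lra. }
    assert (0 <= th a (a + l) x) by (unfold th; apply Rmult_le_pos; apply Rle_0_sqr).
    rewrite (Rmult_comm K). apply Rmult_le_compat_l; auto. }
  assert (H3 : RInt (fun x => K * th a (a + l) x) a (a + l) = K * (l^5 / 30)).
  { transitivity (K * RInt (th a (a + l)) a (a + l)).
    { change (RInt (fun x => scal K (th a (a + l) x)) a (a + l) = scal K (RInt (th a (a + l)) a (a + l))).
      apply (RInt_scal (V:=R_CompleteNormedModule)). apply exRI. apply th_cont. }
    f_equal.
    apply is_RInt_unique.
    set (P := fun x => l * l * ((x - a) * (x - a) * (x - a)) / 3 - l * ((x - a) * (x - a) * (x - a) * (x - a)) / 2
                       + (x - a) * (x - a) * (x - a) * (x - a) * (x - a) / 5).
    replace (l ^ 5 / 30) with (minus (P (a + l)) (P a)).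
    apply (is_RInt_derive (V:=R_CompleteNormedModule)).
    - intros x _. unfold P, th. eapply is_derive_eq.
      apply dplus. apply dminus.
      unfold Rdiv. apply dmul. apply dmul. apply dconst. apply dmul. apply dmul. apply dxa. apply dxa. apply dxa. apply dconst.
      apply dmul. apply dmul. apply dconst. apply dmul. apply dmul. apply dmul. apply dxa. apply dxa. apply dxa. apply dxa. apply dconst.
      apply dmul. apply dmul. apply dmul. apply dmul. apply dmul. apply dxa. apply dxa. apply dxa. apply dxa. apply dxa. apply dconst.
      cbv beta. field.
    - intros; apply th_cont.
    - unfold P, minus, plus, opp; simpl. field. }
  assert (Hfin : K * (l ^ 5 / 30) <= B0 * (Rabs E + 1) * RInt rho a (a + l)) by lra.
  unfold K in Hfin.
  apply (Rmult_le_reg_r (Rabs E + 1)); auto.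
  replace (Cst tau c k0 M1 * RInt rho (a + l) L * (l ^ 5 / 30) * (Rabs E + 1)) with (Cst tau c k0 M1 * (Rabs E + 1) * RInt rho (a + l) L * (l ^ 5 / 30)) by ring.
  replace (B0 * RInt rho a (a + l) * (Rabs E + 1)) with (B0 * (Rabs E + 1) * RInt rho a (a + l)) by ring.
  exact Hfin.
Qed.

End ODE.

Lemma cont_eps (f : R -> R) x : continuous f x -> forall e, 0 < e -> exists d, 0 < d /\ forall y, Rabs (y - x) < d -> Rabs (f y - f x) < e.
Proof.
  intros H e He. apply filterlim_locally with (eps := mkposreal e He) in H.
  destruct H as [d Hd]. exists d. split. apply cond_pos. intros y Hy. apply Hd. exact Hy.
Qed.

Section Geo.
Variables (L x0 : R) (V dV : R -> R).
Hypothesis HL : 0 < L.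
Hypothesis HcV : forall x, continuous V x.
Hypothesis HcdV : forall x, continuous dV x.
Hypothesis HdV : forall x, 0 < x < L -> is_derive V x (dV x).
Hypothesis Hx0 : 0 < x0 < L.
Hypothesis Hcrit : forall x, 0 <= x <= L -> (dV x = 0 <-> x = x0).
Hypothesis Hmin : forall x, 0 <= x <= L -> V x0 <= V x.

Lemma ivt0 a b : dV a < 0 -> 0 < dV b -> exists z, Rmin a b <= z <= Rmax a b /\ dV z = 0.
Proof.
  intros Ha Hb.
  assert (Hc : continuity dV) by (intros t; apply continuity_pt_filterlim; apply HcdV).
  destruct (Rle_dec a b).
  - destruct (IVT_cor dV a b Hc r) as [z [Hz1 Hz2]]. nra. exists z. rewrite Rmin_left, Rmax_right; auto.
  - destruct (IVT_cor dV b a Hc ltac:(lra)) as [z [Hz1 Hz2]]. nra. exists z. rewrite Rmin_right, Rmax_left; lra.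
Qed.

Lemma sign_right x : x0 < x <= L -> 0 < dV x.
Proof.
  intros Hx. destruct (Rlt_le_dec 0 (dV x)) as [|Hle]; auto. exfalso.
  assert (Hneg : dV x < 0).
  { destruct Hle as [|Heq]; auto. apply Hcrit in Heq; lra. }
  assert (Hall : forall b, x0 < b <= L -> dV b < 0).
  { intros b Hb. destruct (Rlt_le_dec (dV b) 0) as [|Hb2]; auto. exfalso.
    destruct Hb2 as [Hb2|Heq]. 2:{ symmetry in Heq. apply Hcrit in Heq; lra. }
    destruct (ivt0 x b Hneg Hb2) as [z [Hz1 Hz2]].
    assert (x0 < z <= L) by (split; [apply Rlt_le_trans with (Rmin x b); [apply Rmin_glb_lt; lra| lra] | apply Rle_trans with (Rmax x b); [lra|apply Rmax_lub; lra]]).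
    apply Hcrit in Hz2; lra. }
  destruct (mvt_open V dV x0 L) as [c [Hc1 Hc2]]; try lra.
  intros; apply HdV; lra. intros; apply HcV.
  assert (dV c < 0) by (apply Hall; lra).
  assert (V x0 <= V L) by (apply Hmin; lra). nra.
Qed.

Lemma sign_left x : 0 <= x < x0 -> dV x < 0.
Proof.
  intros Hx. destruct (Rlt_le_dec (dV x) 0) as [|Hle]; auto. exfalso.
  assert (Hpos : 0 < dV x).
  { destruct Hle as [|Heq]; auto. symmetry in Heq. apply Hcrit in Heq; lra. }
  assert (Hall : forall b, 0 <= b < x0 -> 0 < dV b).
  { intros b Hb. destruct (Rlt_le_dec 0 (dV b)) as [|Hb2]; auto. exfalso.
    destruct Hb2 as [Hb2|Heq]. 2:{ apply Hcrit in Heq; lra. }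
    destruct (ivt0 b x Hb2 Hpos) as [z [Hz1 Hz2]].
    assert (0 <= z < x0) by (split; [apply Rle_trans with (Rmin b x); [apply Rmin_glb; lra| lra] | apply Rle_lt_trans with (Rmax b x); [lra|apply Rmax_lub_lt; lra]]).
    apply Hcrit in Hz2; lra. }
  destruct (mvt_open V dV 0 x0) as [c [Hc1 Hc2]]; try lra.
  intros; apply HdV; lra. intros; apply HcV.
  assert (0 < dV c) by (apply Hall; lra).
  assert (V x0 <= V 0) by (apply Hmin; lra). nra.
Qed.

Lemma mono_right a b : x0 <= a <= b -> b <= L -> V a <= V b.
Proof.
  intros Ha Hb. apply (mono_deriv V dV); try lra.
  intros; apply HdV; lra. intros x Hx. apply Rlt_le, sign_right; lra. intros; apply HcV.
Qed.

Lemma mono_left a b : 0 <= a <= b -> b <= x0 -> V b <= V a.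
Proof.
  intros Ha Hb. assert (H : (fun t => - V t) a <= (fun t => - V t) b).
  { apply (mono_deriv (fun t => - V t) (fun t => - dV t)); try lra.
    intros x Hx. apply (is_derive_opp (K:=R_AbsRing) (V:=R_NormedModule)). apply HdV; lra.
    intros x Hx. assert (dV x < 0) by (apply sign_left; lra). lra.
    intros x _. apply (continuous_opp (K:=R_AbsRing) (V:=R_NormedModule)). apply HcV. }
  simpl in H. lra.
Qed.

Lemma dV_bound d : 0 < d -> exists c, 0 < c /\ forall x, 0 <= x <= L ->
  (x0 + d <= x -> c <= dV x) /\ (x <= x0 - d -> dV x <= - c).
Proof.
  intros Hd.
  assert (Hc : forall t, continuity_pt dV t) by (intros t; apply continuity_pt_filterlim; apply HcdV).
  assert (Hr : exists c1, 0 < c1 /\ forall x, x0 + d <= x <= L -> c1 <= dV x).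
  { destruct (Rle_dec (x0 + d) L) as [Hle|Hgt].
    - destruct (continuity_ab_min dV (x0 + d) L Hle (fun c _ => Hc c)) as [m [Hm1 Hm2]].
      exists (dV m). split. apply sign_right; lra. intros x Hx. apply Hm1; auto.
    - apply Rnot_le_lt in Hgt. exists 1. split. lra. intros; lra. }
  assert (Hl : exists c2, 0 < c2 /\ forall x, 0 <= x <= x0 - d -> dV x <= - c2).
  { destruct (Rle_dec 0 (x0 - d)) as [Hle|Hgt].
    - destruct (continuity_ab_maj dV 0 (x0 - d) Hle (fun c _ => Hc c)) as [m [Hm1 Hm2]].
      exists (- dV m). split. assert (dV m < 0) by (apply sign_left; lra). lra. intros x Hx. rewrite Ropp_involutive. apply Hm1; auto.
    - apply Rnot_le_lt in Hgt. exists 1. split. lra. intros; lra. }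
  destruct Hr as [c1 [Hc1 Hr]]. destruct Hl as [c2 [Hc2 Hl]].
  exists (Rmin c1 c2). split. apply Rmin_glb_lt; auto.
  intros x Hx. split; intros.
  - apply Rle_trans with c1. apply Rmin_l. apply Hr; lra.
  - apply Rle_trans with (- c2). apply Hl; lra. assert (Rmin c1 c2 <= c2) by apply Rmin_r. lra.
Qed.

Lemma growth_right d c a b : 0 < d -> (forall x, 0 <= x <= L -> x0 + d <= x -> c <= dV x) ->
  x0 + d <= a -> a <= b -> b <= L -> V b - V a >= c * (b - a).
Proof.
  intros Hd Hc Ha Hab Hb.
  assert (H : (fun t => V t - c * t) a <= (fun t => V t - c * t) b).
  { apply (mono_deriv (fun t => V t - c * t) (fun t => dV t - c * 1)); try lra.
    intros x Hx. apply dminus. apply HdV; lra. apply is_derive_scal. apply did.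
    intros x Hx. assert (c <= dV x) by (apply Hc; lra). lra.
    intros x _. apply cminus. apply HcV. apply cmul. apply cconst. apply cid. }
  simpl in H. lra.
Qed.

Lemma geo_left nu : 0 < nu -> exists tau c, 0 < tau /\ 0 < c /\
  (forall y x, 0 <= y <= L -> 0 <= x <= L -> x <= y - nu / 2 -> V x >= V y - 4 * tau -> dV x <= - c) /\
  (forall x, 0 <= x <= L -> V x >= V 0 + nu / 2 -> dV x >= c).
Proof.
  intros Hnu.
  destruct (dV_bound (nu / 8) ltac:(lra)) as [c8 [Hc8 H8]].
  set (g := c8 * nu / 16).
  assert (Hg : 0 < g) by (unfold g; nra).
  destruct (cont_eps V x0 (HcV x0) g Hg) as [d1 [Hd1 Hcd1]].
  destruct (cont_eps V x0 (HcV x0) (nu / 2) ltac:(lra)) as [d2 [Hd2 Hcd2]].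
  set (dA := Rmin d1 (nu / 4)).
  assert (HdA : 0 < dA) by (apply Rmin_glb_lt; lra).
  set (dB := d2).
  destruct (dV_bound (Rmin dA dB) ltac:(apply Rmin_glb_lt; unfold dB; lra)) as [cA [HcA HA]].
  exists (c8 * nu / 128), cA. split. nra. split. auto. split.
  - intros y x Hy Hx Hxy HV.
    destruct (Rle_dec x (x0 - Rmin dA dB)) as [Hle|Hgt].
    + apply HA; auto.
    + exfalso.
      assert (HxA : x0 - dA < x) by (assert (Rmin dA dB <= dA) by apply Rmin_l; lra).
      assert (dA <= nu / 4) by apply Rmin_r.
      assert (dA <= d1) by apply Rmin_l.
      assert (Hy1 : x0 + nu / 4 <= y) by lra.
      assert (Hgr : V y - V (y - nu / 8) >= c8 * (y - (y - nu / 8))).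
      { apply (growth_right (nu / 8)); try lra. intros; apply H8; auto. }
      replace (c8 * (y - (y - nu / 8))) with (c8 * nu / 8) in Hgr by field.
      assert (Hcn : 0 < c8 * nu) by nra.
      destruct (Rle_dec x x0) as [Hxx0|Hxx0].
      * assert (Hr1 : Rabs (x - x0) < d1) by (unfold Rabs; destruct Rcase_abs; lra).
        assert (H1' := Hcd1 x Hr1). apply Rabs_lt_between in H1'.
        assert (V x0 <= V (y - nu / 8)) by (apply Hmin; lra).
        unfold g in *. lra.
      * assert (V x <= V (y - nu / 8)) by (apply mono_right; lra).
        lra.
  - intros x Hx HV.
    destruct (Rle_dec (x0 + Rmin dA dB) x) as [Hle|Hgt].
    + apply Rle_ge. apply HA; auto.
    + exfalso. destruct (Rle_dec x x0) as [Hxx0|Hxx0].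
      * assert (V x <= V 0) by (apply mono_left; lra). lra.
      * assert (Rmin dA dB <= dB) by apply Rmin_r.
        assert (Hr1 : Rabs (x - x0) < d2) by (unfold Rabs; destruct Rcase_abs; unfold dB in *; lra).
        assert (H1' := Hcd2 x Hr1). apply Rabs_lt_between in H1'.
        assert (V x0 <= V 0) by (apply Hmin; lra). lra.
Qed.

End Geo.

Lemma geo_full (L x0 : R) (V dV : R -> R) : 0 < L ->
  (forall x, continuous V x) -> (forall x, continuous dV x) ->
  (forall x, 0 < x < L -> is_derive V x (dV x)) -> 0 < x0 < L ->
  (forall x, 0 <= x <= L -> (dV x = 0 <-> x = x0)) ->
  (forall x, 0 <= x <= L -> V x0 <= V x) ->
  forall nu, 0 < nu -> exists tau c, 0 < tau /\ 0 < c /\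
  (forall y x, 0 <= y <= L -> 0 <= x <= L -> x <= y - nu / 2 -> V x >= V y - 4 * tau -> dV x <= - c) /\
  (forall y x, 0 <= y <= L -> 0 <= x <= L -> y + nu / 2 <= x -> V x >= V y - 4 * tau -> dV x >= c) /\
  (forall x, 0 <= x <= L -> V x >= V 0 + nu / 2 -> dV x >= c) /\
  (forall x, 0 <= x <= L -> V x >= V L + nu / 2 -> dV x <= - c).
Proof.
  intros HL HcV HcdV HdV Hx0 Hcrit Hmin nu Hnu.
  destruct (geo_left L x0 V dV HL HcV HcdV HdV Hx0 Hcrit Hmin nu Hnu) as [t1 [c1 [Ht1 [Hc1 [A1 B1]]]]].
  assert (R1 : forall x, continuous (fun x => V (L - x)) x).
  { intros x. apply (continuous_comp (fun t => L - t) V). apply cminus. apply cconst. apply cid. apply HcV. }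
  assert (R2 : forall x, continuous (fun x => - dV (L - x)) x).
  { intros x. apply (continuous_opp (K:=R_AbsRing) (V:=R_NormedModule)).
    apply (continuous_comp (fun t => L - t) dV). apply cminus. apply cconst. apply cid. apply HcdV. }
  assert (R3 : forall x, 0 < x < L -> is_derive (fun x => V (L - x)) x (- dV (L - x))).
  { intros x Hx. eapply is_derive_eq. apply (is_derive_comp V (fun t => L - t)). apply HdV; lra.
    apply dminus. apply dconst. apply did. unfold scal; simpl. unfold mult; simpl. ring. }
  assert (R4 : 0 < L - x0 < L) by lra.
  assert (R5 : forall x, 0 <= x <= L -> (- dV (L - x) = 0 <-> x = L - x0)).
  { intros x Hx. split; intros H.
    + assert (dV (L - x) = 0) by lra. apply Hcrit in H0; lra.
    + assert (dV (L - x) = 0) by (apply Hcrit; lra). lra. }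
  assert (R6 : forall x, 0 <= x <= L -> V (L - (L - x0)) <= V (L - x)).
  { intros x Hx. replace (L - (L - x0)) with x0 by ring. apply Hmin; lra. }
  destruct (geo_left L (L - x0) (fun x => V (L - x)) (fun x => - dV (L - x)) HL R1 R2 R3 R4 R5 R6 nu Hnu)
    as [t2 [c2 [Ht2 [Hc2 [A2 B2]]]]].
  {
    exists (Rmin t1 t2), (Rmin c1 c2).
    assert (Htm : Rmin t1 t2 <= t1 /\ Rmin t1 t2 <= t2) by (split; [apply Rmin_l|apply Rmin_r]).
    assert (Hcm : Rmin c1 c2 <= c1 /\ Rmin c1 c2 <= c2) by (split; [apply Rmin_l|apply Rmin_r]).
    split. apply Rmin_glb_lt; auto. split. apply Rmin_glb_lt; auto.
    split; [|split; [|split]].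
    + intros y x Hy Hx Hxy HV. assert (dV x <= - c1) by (apply (A1 y x); auto; lra). lra.
    + intros y x Hy Hx Hxy HV.
      assert (- dV (L - (L - x)) <= - c2).
      { apply (A2 (L - y) (L - x)); try lra. replace (L - (L - x)) with x by ring. replace (L - (L - y)) with y by ring. lra. }
      replace (L - (L - x)) with x in H by ring. lra.
    + intros x Hx HV. assert (dV x >= c1) by (apply B1; auto). lra.
    + intros x Hx HV.
      assert (- dV (L - (L - x)) >= c2).
      { apply (B2 (L - x)); try lra. replace (L - (L - x)) with x by ring. replace (L - 0) with L by ring. lra. }
      replace (L - (L - x)) with x in H by ring. lra.
  }
Qed.

Lemma loc_clamp L x : 0 < x < L -> locally x (fun t => clamp L t = t).
Proof.
  intros Hx. assert (Hd : 0 < Rmin x (L - x)) by (apply Rmin_glb_lt; lra).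
  exists (mkposreal _ Hd). intros t Ht. unfold ball in Ht; simpl in Ht. unfold AbsRing_ball in Ht; simpl in Ht.
  unfold abs, minus, plus, opp in Ht; simpl in Ht.
  assert (Rmin x (L - x) <= x) by apply Rmin_l. assert (Rmin x (L - x) <= L - x) by apply Rmin_r.
  apply Rabs_lt_between in Ht. apply clamp_id. lra.
Qed.

Lemma bound_on (f : R -> R) L : 0 <= L -> (forall x, continuous f x) -> exists M, 0 <= M /\ forall x, 0 <= x <= L -> Rabs (f x) <= M.
Proof.
  intros HL Hc.
  destruct (continuity_ab_maj (fun x => Rabs (f x)) 0 L HL) as [m [Hm _]].
  - intros c _. apply continuity_pt_filterlim. apply continuous_Rabs_comp. apply Hc.
  - exists (Rabs (f m)). split. apply Rabs_pos. intros; apply Hm; auto.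
Qed.

Lemma B0_bound a l x E w eps M1 : 0 < l -> a < x < a + l -> 0 < eps <= 1 -> Rabs w <= M1 -> 0 <= M1 ->
  2 * th a (a + l) x * (E - w) + eps^2 / 2 * th2 a (a + l) x <= (2 * l^4 * (M1 + 1) + 2 * l^2) * (Rabs E + 1).
Proof.
  intros Hl Hx He Hw HM.
  set (s := x - a). set (r := a + l - x).
  assert (Hs : 0 < s < l) by (unfold s; lra). assert (Hr : 0 < r < l) by (unfold r; lra).
  assert (Eth : th a (a + l) x = (s * s) * (r * r)) by (unfold th, s, r; ring).
  assert (Eth2 : th2 a (a + l) x = 2 * (r * r) - 8 * s * r + 2 * (s * s)) by (unfold th2, s, r; ring).
  rewrite Eth, Eth2.
  assert (Hss : s * s <= l * l) by nra. assert (Hrr : r * r <= l * l) by nra.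
  assert (Hth : 0 <= s * s * (r * r) <= l^4).
  { split. apply Rmult_le_pos; apply Rle_0_sqr. replace (l^4) with ((l * l) * (l * l)) by ring.
    apply Rmult_le_compat; try apply Rle_0_sqr; auto. }
  assert (HEw : Rabs (E - w) <= (M1 + 1) * (Rabs E + 1)).
  { pose proof (Rabs_triang E (- w)). rewrite Rabs_Ropp in H. unfold Rminus.
    pose proof (Rabs_pos E). nra. }
  assert (T1 : 2 * (s * s * (r * r)) * (E - w) <= 2 * l^4 * ((M1 + 1) * (Rabs E + 1))).
  { assert (E - w <= Rabs (E - w)) by apply Rle_abs.
    assert (s * s * (r * r) * (E - w) <= s * s * (r * r) * Rabs (E - w)) by (apply Rmult_le_compat_l; lra).
    assert (s * s * (r * r) * Rabs (E - w) <= l^4 * ((M1 + 1) * (Rabs E + 1))).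
    { apply Rmult_le_compat; try lra. apply Rabs_pos. }
    lra. }
  assert (T2 : eps^2 / 2 * (2 * (r * r) - 8 * s * r + 2 * (s * s)) <= 2 * l^2).
  { assert (Hsr : 0 <= s * r) by nra.
    assert (Hth2 : 2 * (r * r) - 8 * s * r + 2 * (s * s) <= 4 * (l * l)) by lra.
    assert (He2 : 0 <= eps^2 <= 1) by (split; [apply pow_le; lra| simpl; nra]).
    destruct (Rle_dec 0 (2 * (r * r) - 8 * s * r + 2 * (s * s))).
    - assert (eps^2 * (2 * (r * r) - 8 * s * r + 2 * (s * s)) <= 1 * (4 * (l * l))) by (apply Rmult_le_compat; lra).
      simpl in *. lra.
    - assert (eps^2 * (2 * (r * r) - 8 * s * r + 2 * (s * s)) <= 0).
      { apply Rmult_le_0_l; lra. }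
      assert (0 <= l^2) by (apply pow_le; lra). lra. }
  assert (0 <= Rabs E) by apply Rabs_pos.
  assert (0 <= l^2) by (apply pow_le; lra).
  assert (2 * l^2 <= 2 * l^2 * (Rabs E + 1)) by nra.
  lra.
Qed.

Lemma final_bd eps A S Cs : 0 < eps -> 0 < A -> 0 <= S -> eps^2 * S >= Cs * A -> 0 <= Cs ->
  eps / sqrt A * sqrt S >= sqrt Cs.
Proof.
  intros He HA HS H HC.
  set (X := eps / sqrt A * sqrt S).
  assert (HsA : 0 < sqrt A) by (apply sqrt_lt_R0; auto).
  assert (HX : 0 <= X) by (unfold X; apply Rmult_le_pos; [apply Rlt_le, Rdiv_lt_0_compat; auto | apply sqrt_pos]).
  assert (HX2 : X * X = eps^2 * S / A).
  { unfold X. replace (eps / sqrt A * sqrt S * (eps / sqrt A * sqrt S)) with (eps * eps * (sqrt S * sqrt S) / (sqrt A * sqrt A)) by (field; lra).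
    rewrite !sqrt_sqrt; try lra. all: try (field; lra). }
  assert (Cs <= X * X) by (rewrite HX2; apply (Rmult_le_reg_r A); auto; unfold Rdiv; rewrite Rmult_assoc, Rinv_l; lra).
  apply Rle_ge. rewrite <- (sqrt_square X); auto. apply sqrt_le_1_alt. auto.
Qed.

Lemma ode_from_C (eps w E : R) (d2 p : C) : (- RtoC (eps ^ 2) * d2 + RtoC w * p = RtoC E * p)%C ->
  eps^2 * fst d2 = (w - E) * fst p /\ eps^2 * snd d2 = (w - E) * snd p.
Proof. intros H. assert (H1 := f_equal fst H). assert (H2 := f_equal snd H). simpl in H1, H2. split; lra. Qed.

Lemma cmod2 (p : C) : Cmod p ^ 2 = fst p * fst p + snd p * snd p.
Proof. rewrite Cmod2_alt. unfold Re, Im. ring. Qed.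

Lemma deriv_clampC L (f df : R -> C) x : 0 < x < L -> is_derive f x (df x) ->
  is_derive (fun t => f (clamp L t)) x (df (clamp L x)).
Proof.
  intros Hx H. rewrite (clamp_id L x) by lra.
  apply (is_derive_ext_loc f). 2: exact H.
  apply (filter_imp (fun t => clamp L t = t)). intros t Ht; rewrite Ht; auto. apply loc_clamp; auto.
Qed.

Lemma deriv_clampR L (f df : R -> R) x : 0 < x < L -> is_derive f x (df x) ->
  is_derive (fun t => f (clamp L t)) x (df (clamp L x)).
Proof.
  intros Hx H. rewrite (clamp_id L x) by lra.
  apply (is_derive_ext_loc f). 2: exact H.
  apply (filter_imp (fun t => clamp L t = t)). intros t Ht; rewrite Ht; auto. apply loc_clamp; auto.
Qed.

Lemma RInt_nonneg_rho (u v : R -> R) a b : a <= b -> (forall x, continuous u x) -> (forall x, continuous v x) -> 0 <= RInt (rho u v) a b.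
Proof. intros. apply RInt_ge_0; auto. apply exRI. apply rho_cont; auto. intros; apply rho_ge0. Qed.

Lemma chasles_rho (u v : R -> R) a b c : (forall x, continuous u x) -> (forall x, continuous v x) ->
  RInt (rho u v) a c = RInt (rho u v) a b + RInt (rho u v) b c.
Proof. intros. symmetry. apply (RInt_Chasles (V:=R_CompleteNormedModule)); apply exRI; apply rho_cont; auto. Qed.

Theorem proposition2p3
  (L : R) (HL : 0 < L)
  (V dV : R -> R) (HV : C1_on L V dV)
  (x0 : R) (Hx0 : 0 < x0 < L)
  (Hcrit : forall x, 0 <= x <= L -> (dV x = 0 <-> x = x0))
  (Hmin : forall x, 0 <= x <= L -> V x0 <= V x)
  (q dq : R -> R -> R)
  (Hq : forall eps, 0 < eps <= 1 -> C1_on L (q eps) (dq eps))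
  (Hq0 : forall eta, 0 < eta -> exists delta, 0 < delta /\
           forall eps, 0 < eps < delta -> eps <= 1 ->
             forall x, 0 <= x <= L -> Rabs (q eps x) <= eta /\ Rabs (dq eps x) <= eta)
  (lam : R -> R)
  (Hlam : forall eta, 0 < eta -> exists delta, 0 < delta /\
           forall eps, 0 < eps < delta -> eps < 1 -> Rabs (lam eps) <= eta)
  (nu : R) (Hnu : 0 < nu) :
  exists K eps0, 0 < K /\ 0 < eps0 < 1 /\
    forall y, 0 <= y <= L ->
    forall eps, 0 < eps <= eps0 ->
    forall (E : R) (psi dpsi : R -> C),
      dirichlet_eigenfunction L eps (fun x => V x + q eps x) E psi dpsi ->
      (E >= V y - lam eps -> L2norm psi (Rmax (y - nu) 0) (Rmin (y + nu) L) >= K) /\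
      (E >= V 0 + nu -> eps / sqrt (Rabs E + 1) * Cmod (dpsi 0) >= K) /\
      (E >= V L + nu -> eps / sqrt (Rabs E + 1) * Cmod (dpsi L) >= K).
Proof.
  destruct HV as [HVc [HdVc HVd]].
  set (Vc := fun x => V (clamp L x)). set (dVc := fun x => dV (clamp L x)).
  assert (HL0 : 0 <= L) by lra.
  assert (CVc : forall x, continuous Vc x) by (apply within_clamp; auto).
  assert (CdVc : forall x, continuous dVc x) by (apply within_clamp; auto).
  assert (DVc : forall x, 0 < x < L -> is_derive Vc x (dVc x)).
  { intros x Hx. apply (deriv_clampR L V dV x Hx). apply HVd; auto. }
  assert (EVc : forall x, 0 <= x <= L -> Vc x = V x) by (intros; unfold Vc; rewrite clamp_id; auto).
  assert (EdVc : forall x, 0 <= x <= L -> dVc x = dV x) by (intros; unfold dVc; rewrite clamp_id; auto).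
  assert (Hcrit' : forall x, 0 <= x <= L -> (dVc x = 0 <-> x = x0)) by (intros; rewrite EdVc; auto).
  assert (Hmin' : forall x, 0 <= x <= L -> Vc x0 <= Vc x) by (intros; rewrite !EVc; auto; lra).
  destruct (geo_full L x0 Vc dVc HL CVc CdVc DVc Hx0 Hcrit' Hmin' nu Hnu)
    as [tau0 [c [Htau0 [Hc [G1 [G2 [G3 G4]]]]]]].
  destruct (bound_on Vc L HL0 CVc) as [MV [HMV BV]].
  destruct (bound_on dVc L HL0 CdVc) as [MdV [HMdV BdV]].
  set (tau := Rmin tau0 (Rmin (nu / 4) 1)).
  assert (Htau : 0 < tau /\ tau <= tau0 /\ tau <= nu / 4 /\ tau <= 1).
  { unfold tau. repeat split.
    apply Rmin_glb_lt; auto. apply Rmin_glb_lt; lra. apply Rmin_l.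
    eapply Rle_trans. apply Rmin_r. apply Rmin_l. eapply Rle_trans. apply Rmin_r. apply Rmin_r. }
  set (eta := Rmin tau0 (Rmin (c / 2) (Rmin (nu / 4) 1))).
  assert (Heta : 0 < eta /\ eta <= tau0 /\ eta <= c / 2 /\ eta <= nu / 4 /\ eta <= 1).
  { unfold eta. repeat split.
    apply Rmin_glb_lt; auto. apply Rmin_glb_lt; try lra. apply Rmin_glb_lt; lra. apply Rmin_l.
    eapply Rle_trans. apply Rmin_r. apply Rmin_l.
    eapply Rle_trans. apply Rmin_r. eapply Rle_trans. apply Rmin_r. apply Rmin_l.
    eapply Rle_trans. apply Rmin_r. eapply Rle_trans. apply Rmin_r. apply Rmin_r. }
  destruct (Hq0 eta (proj1 Heta)) as [dq0 [Hdq0 Hq0']].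
  destruct (Hlam tau (proj1 Htau)) as [dl0 [Hdl0 Hlam']].
  set (M1 := MV + 2). set (D := MdV + 1). set (k0 := 2 * D / tau + 1). set (c' := c / 2).
  set (Cs := Cst L tau c' k0 M1).
  set (l := nu / 2). set (B0 := 2 * l^4 * (M1 + 1) + 2 * l^2).
  assert (Hk0 : 0 < k0).
  { unfold k0. assert (0 <= 2 * D / tau) by (apply Rdiv_le_0_compat; unfold D; lra). lra. }
  assert (Hk0t : k0 * tau >= 2 * D).
  { unfold k0. replace ((2 * D / tau + 1) * tau) with (2 * D + tau) by (field; lra). lra. }
  assert (HCs : 0 < Cs) by (apply Cst_pos; unfold c', M1; lra).
  assert (Hl : 0 < l) by (unfold l; lra).
  assert (HB0 : 0 <= B0).
  { unfold B0. assert (0 <= l^4) by (apply pow_le; lra). assert (0 <= l^2) by (apply pow_le; lra).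
    unfold M1. nra. }
  set (Rr := B0 * 30 / (Cs * l^5)).
  assert (Hl5 : 0 < l^5) by (apply pow_lt; lra).
  assert (HRr : 0 <= Rr) by (unfold Rr; apply Rdiv_le_0_compat; [lra | apply Rmult_lt_0_compat; lra]).
  set (K0 := 1 / (1 + 2 * Rr)).
  assert (HK0 : 0 < K0) by (unfold K0; apply Rdiv_lt_0_compat; lra).
  exists (Rmin (sqrt K0) (sqrt Cs)), (Rmin dq0 (Rmin dl0 1) / 2).
  assert (Hm3 : 0 < Rmin dq0 (Rmin dl0 1)) by (apply Rmin_glb_lt; auto; apply Rmin_glb_lt; lra).
  assert (Hm3' : Rmin dq0 (Rmin dl0 1) <= dq0 /\ Rmin dq0 (Rmin dl0 1) <= dl0 /\ Rmin dq0 (Rmin dl0 1) <= 1).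
  { repeat split. apply Rmin_l. eapply Rle_trans. apply Rmin_r. apply Rmin_l. eapply Rle_trans. apply Rmin_r. apply Rmin_r. }
  split. { apply Rmin_glb_lt; apply sqrt_lt_R0; auto. }
  split. { lra. }
  intros y Hy eps Heps E psi dpsi Hdir.
  assert (Heps1 : 0 < eps < dq0 /\ eps <= 1 /\ eps < dl0 /\ eps < 1) by lra.
  destruct Heps1 as [Hed [He1 [Hel He1']]].
  destruct Hdir as [Hpc [Hdpc [Hpd [Hode [Hp0 [HpL Hnorm]]]]]].
  destruct (Hq eps ltac:(lra)) as [Hqc [Hdqc Hqd]].
  assert (Hlam1 : Rabs (lam eps) <= tau) by (apply Hlam'; lra).
  assert (Hqb : forall x, 0 <= x <= L -> Rabs (q eps x) <= eta /\ Rabs (dq eps x) <= eta) by (intros; apply Hq0'; auto; lra).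
  set (u := fun x => fst (psi (clamp L x))). set (v := fun x => snd (psi (clamp L x))).
  set (du := fun x => fst (dpsi (clamp L x))). set (dv := fun x => snd (dpsi (clamp L x))).
  set (W := fun x => Vc x + q eps (clamp L x)). set (dW := fun x => dVc x + dq eps (clamp L x)).
  assert (Cpsi : forall x, continuous (fun t => psi (clamp L t)) x) by (apply within_clamp; auto).
  assert (Cdpsi : forall x, continuous (fun t => dpsi (clamp L t)) x) by (apply within_clamp; auto).
  assert (Hcu : forall x, continuous u x) by (intros; apply cont_fst; auto).
  assert (Hcv : forall x, continuous v x) by (intros; apply cont_snd; auto).
  assert (Hcdu : forall x, continuous du x) by (intros; apply cont_fst; auto).
  assert (Hcdv : forall x, continuous dv x) by (intros; apply cont_snd; auto).
  assert (Cq : forall x, continuous (fun t => q eps (clamp L t)) x) by (apply within_clamp; auto).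
  assert (Cdq : forall x, continuous (fun t => dq eps (clamp L t)) x) by (apply within_clamp; auto).
  assert (HcW : forall x, continuous W x) by (intros; apply cplus; auto).
  assert (HcdW : forall x, continuous dW x) by (intros; apply cplus; auto).
  assert (Hd : forall x, 0 < x < L -> is_derive u x (du x) /\ is_derive v x (dv x) /\ is_derive W x (dW x)).
  { intros x Hx. assert (Hp := deriv_clampC L psi dpsi x Hx (Hpd x Hx)). split; [|split].
    - apply (is_derive_fst (fun t => psi (clamp L t))); auto.
    - apply (is_derive_snd (fun t => psi (clamp L t))); auto.
    - apply dplus. apply DVc; auto. apply (deriv_clampR L (q eps) (dq eps) x Hx). apply Hqd; auto. }
  assert (H2 : forall x, 0 < x < L -> exists a b : R, is_derive du x a /\ is_derive dv x b /\
      eps^2 * a = (W x - E) * u x /\ eps^2 * b = (W x - E) * v x).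
  { intros x Hx. destruct (Hode x Hx) as [d2 [Hd2 Eq2]].
    apply ode_from_C in Eq2. exists (fst d2), (snd d2).
    assert (Hcl : clamp L x = x) by (apply clamp_id; lra).
    assert (Hdd : is_derive (fun t => dpsi (clamp L t)) x d2).
    { apply (is_derive_ext_loc dpsi). 2: exact Hd2.
      apply (filter_imp (fun t => clamp L t = t)). intros t Ht; rewrite Ht; auto. apply loc_clamp; auto. }
    split; [|split; [|split]].
    - apply (is_derive_fst (fun t => dpsi (clamp L t))); auto.
    - apply (is_derive_snd (fun t => dpsi (clamp L t))); auto.
    - unfold W, u, Vc. rewrite Hcl. apply Eq2.
    - unfold W, v, Vc. rewrite Hcl. apply Eq2. }
  assert (Hb0 : u 0 = 0 /\ v 0 = 0).
  { unfold u, v. rewrite clamp_id by lra. rewrite Hp0. simpl. lra. }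
  assert (HbL : u L = 0 /\ v L = 0).
  { unfold u, v. rewrite clamp_id by lra. rewrite HpL. simpl. lra. }
  assert (Hnorm' : RInt (rho u v) 0 L = 1).
  { rewrite <- Hnorm. apply RInt_ext. intros x Hx. rewrite Rmin_left, Rmax_right in Hx by lra.
    unfold rho, u, v. rewrite clamp_id by lra. rewrite cmod2. reflexivity. }
  assert (Hbd : forall x, 0 <= x <= L -> Rabs (W x) <= M1 /\ Rabs (dW x) <= D).
  { intros x Hx. destruct (Hqb x Hx) as [Hq1 Hq2]. unfold W, dW, M1, D. rewrite clamp_id by lra. split.
    - eapply Rle_trans. apply Rabs_triang. assert (Rabs (Vc x) <= MV) by auto. lra.
    - eapply Rle_trans. apply Rabs_triang. assert (Rabs (dVc x) <= MdV) by auto. lra. }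
  assert (EW : forall x, 0 <= x <= L -> Rabs (W x - Vc x) <= eta /\ Rabs (dW x - dVc x) <= eta).
  { intros x Hx. unfold W, dW. rewrite clamp_id by lra. replace (Vc x + q eps x - Vc x) with (q eps x) by ring.
    replace (dVc x + dq eps x - dVc x) with (dq eps x) by ring. apply Hqb; auto. }
  assert (HB0x : forall a x, a < x < a + l -> 0 <= x <= L ->
    2 * th a (a + l) x * (E - W x) + eps^2 / 2 * th2 a (a + l) x <= B0 * (Rabs E + 1)).
  { intros a x Hx HxL. unfold B0. apply B0_bound; try lra. apply Hbd; auto. unfold M1; lra. }
  assert (Hrho : forall a b, a <= b -> 0 <= RInt (rho u v) a b) by (intros; apply RInt_nonneg_rho; auto).
  assert (HVcy : Vc y = V y) by (apply EVc; auto).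
  assert (Heps0 : 0 < eps) by lra.
  assert (HVL : - MV <= V 0 /\ - MV <= V L /\ - MV <= V y).
  { assert (Rabs (Vc 0) <= MV) by (apply BV; lra). assert (Rabs (Vc L) <= MV) by (apply BV; lra).
    assert (Rabs (Vc y) <= MV) by (apply BV; lra).
    rewrite EVc in H, H0, H1 by lra. apply Rabs_le_between in H. apply Rabs_le_between in H0.
    apply Rabs_le_between in H1. lra. }
  assert (HCmod : forall z, 0 <= z <= L -> Cmod (dpsi z) = sqrt (du z * du z + dv z * dv z)).
  { intros z Hz. unfold du, dv. rewrite clamp_id by lra. unfold Cmod. f_equal. simpl. ring. }
  assert (HKle : Rmin (sqrt K0) (sqrt Cs) <= sqrt K0 /\ Rmin (sqrt K0) (sqrt Cs) <= sqrt Cs) by (split; [apply Rmin_l|apply Rmin_r]).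
  split; [|split].
  -
    intros HE.
    assert (HE' : - M1 <= E).
    { apply Rabs_le_between in Hlam1. unfold M1. lra. }
    set (a := Rmax (y - nu) 0). set (b := Rmin (y + nu) L).
    assert (Hab : 0 <= a /\ a <= b /\ b <= L /\ a <= y /\ y <= b).
    { unfold a, b, Rmax, Rmin. repeat destruct Rle_dec; lra. }
    assert (Hsplit : 1 = RInt (rho u v) 0 a + RInt (rho u v) a b + RInt (rho u v) b L).
    { rewrite <- Hnorm'. rewrite (chasles_rho u v 0 a L) by auto. rewrite (chasles_rho u v a b L) by auto. ring. }
    set (mU := RInt (rho u v) a b).
    assert (HmU0 : 0 <= mU) by (apply Hrho; lra).
    assert (HCl5 : 0 < Cs * l^5) by (apply Rmult_lt_0_compat; lra).
    assert (HmL : RInt (rho u v) 0 a <= Rr * mU).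
    { destruct (Rle_dec (y - nu) 0) as [Hyn|Hyn].
      - assert (a = 0) by (unfold a, Rmax; destruct Rle_dec; lra). rewrite H, RInt_point.
        unfold zero; simpl. nra.
      - assert (Ha : a = y - nu) by (unfold a, Rmax; destruct Rle_dec; lra).
        assert (Hml : Cs * RInt (rho u v) 0 a * (l^5 / 30) <= B0 * RInt (rho u v) a (a + l)).
        { unfold Cs. apply (mass_left L eps E u v du dv W dW Heps0 Hcu Hcv Hcdu Hcdv HcW Hd H2 Hb0 tau c' k0 M1 D a l B0); try lra.
          - unfold c'; lra.
          - unfold M1; lra.
          - unfold D; lra.
          - exact Hbd.
          - unfold l; lra.
          - intros x Hx HWx. destruct (EW x ltac:(unfold l in *; lra)) as [E1 E2].
            apply Rabs_le_between in E1. apply Rabs_le_between in E2. apply Rabs_le_between in Hlam1.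
            assert (dVc x <= - c).
            { apply (G1 y x); auto; try (unfold l in *; lra). }
            unfold c'. lra.
          - intros x Hx. apply HB0x; auto. unfold l in *; lra. }
        assert (Hsub : RInt (rho u v) a (a + l) <= mU).
        { unfold mU. rewrite (chasles_rho u v a (a + l) b) by auto.
          assert (0 <= RInt (rho u v) (a + l) b) by (apply Hrho; unfold b, l, Rmin in *; destruct Rle_dec; lra). lra. }
        assert (Hml2 : Cs * RInt (rho u v) 0 a * (l^5 / 30) <= B0 * mU) by (assert (B0 * RInt (rho u v) a (a + l) <= B0 * mU) by (apply Rmult_le_compat_l; lra); lra).
        unfold Rr. apply (Rmult_le_reg_r (Cs * l^5 / 30)). apply Rdiv_lt_0_compat; lra.
        replace (B0 * 30 / (Cs * l ^ 5) * mU * (Cs * l ^ 5 / 30)) with (B0 * mU) by (field; lra).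
        replace (RInt (rho u v) 0 a * (Cs * l ^ 5 / 30)) with (Cs * RInt (rho u v) 0 a * (l ^ 5 / 30)) by field. lra. }
    assert (HmR : RInt (rho u v) b L <= Rr * mU).
    { destruct (Rle_dec L (y + nu)) as [Hyn|Hyn].
      - assert (b = L) by (unfold b, Rmin; destruct Rle_dec; lra). rewrite H, RInt_point.
        unfold zero; simpl. nra.
      - assert (Hb : b = y + nu) by (unfold b, Rmin; destruct Rle_dec; lra).
        set (a' := y + nu / 2).
        assert (Ha'b : a' + l = b) by (unfold a', l; lra).
        assert (Hmr : Cs * RInt (rho u v) (a' + l) L * (l^5 / 30) <= B0 * RInt (rho u v) a' (a' + l)).
        { unfold Cs. apply (mass_right L eps E u v du dv W dW HL Heps0 Hcu Hcv Hcdu Hcdv HcW Hd H2 HbL tau c' k0 M1 D a' l B0); try lra.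
          - unfold c'; lra.
          - unfold M1; lra.
          - unfold D; lra.
          - exact Hbd.
          - unfold a'; lra.
          - intros x Hx HWx. destruct (EW x ltac:(unfold a' in *; lra)) as [E1 E2].
            apply Rabs_le_between in E1. apply Rabs_le_between in E2. apply Rabs_le_between in Hlam1.
            assert (dVc x >= c).
            { apply (G2 y x); auto; try (unfold a' in *; lra). }
            unfold c'. lra.
          - intros x Hx. apply HB0x; auto. unfold a', l in *; lra. }
        rewrite Ha'b in Hmr.
        assert (Hsub : RInt (rho u v) a' b <= mU).
        { unfold mU. rewrite (chasles_rho u v a a' b) by auto.
          assert (0 <= RInt (rho u v) a a') by (apply Hrho; unfold a' in *; lra). lra. }
        assert (Hmr2 : Cs * RInt (rho u v) b L * (l^5 / 30) <= B0 * mU) by (assert (B0 * RInt (rho u v) a' b <= B0 * mU) by (apply Rmult_le_compat_l; lra); lra).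
        unfold Rr. apply (Rmult_le_reg_r (Cs * l^5 / 30)). apply Rdiv_lt_0_compat; lra.
        replace (B0 * 30 / (Cs * l ^ 5) * mU * (Cs * l ^ 5 / 30)) with (B0 * mU) by (field; lra).
        replace (RInt (rho u v) b L * (Cs * l ^ 5 / 30)) with (Cs * RInt (rho u v) b L * (l ^ 5 / 30)) by field. lra. }
    assert (HmUK : K0 <= mU).
    { unfold K0. apply (Rmult_le_reg_r (1 + 2 * Rr)). lra.
      replace (1 / (1 + 2 * Rr) * (1 + 2 * Rr)) with 1 by (field; lra). fold mU in Hsplit. lra. }
    unfold L2norm. fold a b.
    replace (RInt (fun x => Cmod (psi x) ^ 2) a b) with mU.
    + apply Rle_ge. eapply Rle_trans. apply (proj1 HKle). apply sqrt_le_1_alt. auto.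
    + unfold mU. apply RInt_ext. intros x Hx. rewrite Rmin_left, Rmax_right in Hx by lra.
      unfold rho, u, v. rewrite clamp_id by lra. rewrite cmod2. reflexivity.
  -
    intros HE.
    assert (HE' : - M1 <= E) by (unfold M1; lra).
    assert (Hrb : FF eps E u v du dv W 0 >= Cs * (Rabs E + 1) * RInt (rho u v) 0 L).
    { unfold Cs. apply (right_bound L eps E u v du dv W dW HL Heps0 Hcu Hcv Hcdu Hcdv HcW Hd H2 HbL tau c' k0 M1 D 0); try lra.
      - unfold c'; lra.
      - unfold M1; lra.
      - unfold D; lra.
      - exact Hbd.
      - intros x Hx HWx. destruct (EW x ltac:(lra)) as [E1 E2].
        apply Rabs_le_between in E1. apply Rabs_le_between in E2.
        assert (dVc x >= c).
        { apply G3; auto. assert (Vc 0 = V 0) by (apply EVc; lra). lra. }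
        unfold c'. lra. }
    rewrite Hnorm' in Hrb.
    assert (EF : FF eps E u v du dv W 0 = eps^2 * (du 0 * du 0 + dv 0 * dv 0)).
    { unfold FF, rho. destruct Hb0 as [-> ->]. ring. }
    rewrite EF in Hrb. rewrite HCmod by lra.
    apply Rge_trans with (sqrt Cs).
    - apply (final_bd eps (Rabs E + 1) _ Cs); try lra.
      pose proof (Rabs_pos E); lra.
      assert (0 <= du 0 * du 0) by apply Rle_0_sqr. assert (0 <= dv 0 * dv 0) by apply Rle_0_sqr. lra.
    - apply Rle_ge; apply (proj2 HKle).
  -
    intros HE.
    assert (HE' : - M1 <= E) by (unfold M1; lra).
    assert (Hlb : FF eps E u v du dv W L >= Cs * (Rabs E + 1) * RInt (rho u v) 0 L).
    { unfold Cs. apply (left_bound L eps E u v du dv W dW Heps0 Hcu Hcv Hcdu Hcdv HcW Hd H2 Hb0 tau c' k0 M1 D L); try lra.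
      - unfold c'; lra.
      - unfold M1; lra.
      - unfold D; lra.
      - exact Hbd.
      - intros x Hx HWx. destruct (EW x ltac:(lra)) as [E1 E2].
        apply Rabs_le_between in E1. apply Rabs_le_between in E2.
        assert (dVc x <= - c).
        { apply G4; auto. assert (Vc L = V L) by (apply EVc; lra). lra. }
        unfold c'. lra. }
    rewrite Hnorm' in Hlb.
    assert (EF : FF eps E u v du dv W L = eps^2 * (du L * du L + dv L * dv L)).
    { unfold FF, rho. destruct HbL as [-> ->]. ring. }
    rewrite EF in Hlb. rewrite HCmod by lra.
    apply Rge_trans with (sqrt Cs).
    - apply (final_bd eps (Rabs E + 1) _ Cs); try lra.
      pose proof (Rabs_pos E); lra.
      assert (0 <= du L * du L) by apply Rle_0_sqr. assert (0 <= dv L * dv L) by apply Rle_0_sqr. lra.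
    - apply Rle_ge; apply (proj2 HKle).
Qed.
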